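(* Let $P\subset\mathbb{R}^n$ be the moment polytope of a compact symplectic toric manifold. If the toric fiber $L(\mathbf{u})$ over a point $\mathbf{u}\in\mathrm{Int}(P)$ is strongly bulk-balanced, then $\mathbf{u}\in\mathrm{Trop}(P,\mathbf{m})$ for every $\mathbf{m}\in\mathbb{Z}^n$.
   Context: $P=\bigcap_{j=1}^m\{\mathbf{u}:\ell_j(\mathbf{u})\ge0\}$, $\ell_j(\mathbf{u})=\langle\mathbf{u},\mathbf{v}_j\rangle-\lambda_j$, $\mathbf{v}_j\in\mathbb{Z}^n$ primitive inward facet normals, half-spaces non-redundant. $\mathrm{Trop}(P,\mathbf{m})$ is the non-differentiable locus of $\mathbf{u}\mapsto\min\{\ell_j(\mathbf{u}):\langle\mathbf{m},\mathbf{v}_j\rangle\neq0\}$, i.e. where the minimum is attained by at least two distinct such indices; $\mathrm{Trop}(P,\mathbf{0})=\mathbb{R}^n$. Strongly bulk-balanced: let $S_1<S_2<\cdots$ be the distinct values of $\ell_j(\mathbf{u})$, $I_l=\{j:\ell_j(\mathbf{u})=S_l\}$, $A^\perp_l=\mathrm{span}_\mathbb{R}\{\mathbf{v}_j:j\in I_1\cup\dots\cup I_l\}$, $d_l=\dim A^\perp_l-\dim A^\perp_{l-1}$, $\kappa$ minimal with $A^\perp_\kappa=\mathbb{R}^n$. Choose $e^*_{r,s}\in\mathbb{Q}^n$ ($1\le r\le\kappa$, $1\le s\le d_r$) such that $\{e^*_{r,s}:r\le l\}$ is a $\mathbb{Q}$-basis of $A^\perp_l\cap\mathbb{Q}^n$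 for all $l$ and each $\mathbf{v}_j\in\bigoplus\mathbb{Z}e^*_{r,s}$; with $\mathbf{v}_j=\sum v_j^{r,s}e^*_{r,s}$ set $\mathbf{y}^{\mathbf{v}_j}=\prod y_{r,s}^{v_j^{r,s}}$. For $c\in(\mathbb{C}^* )^m$ let $F_l^c=\sum_{j\in I_l}c_j\mathbf{y}^{\mathbf{v}_j}$. $L(\mathbf{u})$ is strongly bulk-balanced if for some $c$ the system $y_{l,s}\partial F^c_l/\partial y_{l,s}=0$ ($1\le l\le\kappa$, $1\le s\le d_l$) has a solution in $(\mathbb{C}^* )^n$; the existence of such a solution does not depend on the choice of the $e^*_{r,s}$. *)

(* Defs.v *)
From HB Require Import structures.
From mathcomp Require Import all_boot all_order all_algebra.
From mathcomp Require Import reals.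
From mathcomp Require Import complex.
Set Implicit Arguments. Unset Strict Implicit. Unset Printing Implicit Defensive.
Import Order.TTheory GRing.Theory Num.Theory.
Local Open Scope ring_scope.

Section Toric.
Variables (R : realType) (n m : nat).
(* facet data: v j = inward primitive normal (in Z^n), lam j = constant *)
Variables (v : 'I_m -> 'I_n -> int) (lam : 'I_m -> R).

Definition ell (j : 'I_m) (u : 'I_n -> R) : R :=
  \sum_(i < n) u i * (v j i)%:~R - lam j.

Definition inP (u : 'I_n -> R) : Prop := forall j, 0 <= ell j u.

(* Int(P): all defining inequalities strict (= topological interior, v_j <> 0) *)
Definition inIntP (u : 'I_n -> R) : Prop := forall j, 0 < ell j u.

Definition primitive_vec (w : 'I_n -> int) : Prop :=
  forall d : int, (forall i, (d %| w i)%Z) -> `|d| = 1.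

Definition non_redundant : Prop :=
  forall j, exists u : 'I_n -> R,
    (forall j', j' != j -> 0 <= ell j' u) /\ ell j u < 0.

Definition bounded : Prop :=
  exists B : R, forall u, inP u -> forall i, `|u i| <= B.

Definition is_vertex (u : 'I_n -> R) : Prop :=
  inP u /\ forall x : 'I_n -> R, exists b : 'I_m -> R,
    (forall j, ell j u != 0 -> b j = 0) /\
    forall i, x i = \sum_(j < m) b j * (v j i)%:~R.

Definition delzant_vertices : Prop :=
  forall u, is_vertex u -> exists f : 'I_n -> 'I_m,
    injective f /\ (forall j, ell j u = 0 <-> exists k, j = f k) /\
    `|\det (\matrix_(k, i) v (f k) i)| = 1.

(* P is the moment polytope of a compact symplectic toric manifold
   (via Delzant's theorem: a Delzant polytope), given by a non-redundant
   presentation with primitive inward normals. *)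
Definition delzant_polytope : Prop :=
  [/\ forall j, primitive_vec (v j), non_redundant, bounded & delzant_vertices].

Definition pair (mm : 'I_n -> int) (j : 'I_m) : int := \sum_(i < n) mm i * v j i.

(* Trop(P, mm): R^n if mm = 0, otherwise the non-differentiability locus of
   u |-> min { ell_j u : <mm, v_j> <> 0 }, i.e. the minimum is attained by at
   least two distinct such indices. *)
Definition Trop (mm : 'I_n -> int) (u : 'I_n -> R) : Prop :=
  (forall i, mm i = 0) \/
  exists j1 j2 : 'I_m, [/\ j1 != j2, pair mm j1 != 0, pair mm j2 != 0,
    ell j1 u = ell j2 u &
    forall j, pair mm j != 0 -> ell j1 u <= ell j u].

(* level of j at u: l such that ell_j(u) = S_l, where S_1 < S_2 < ... are the
   distinct values of ell_j(u) (1-based) *)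
Definition level (u : 'I_n -> R) (j : 'I_m) : nat :=
  (size (undup [seq ell i u | i <- enum 'I_m & ell i u < ell j u])).+1.

Definition in_Aperp (u : 'I_n -> R) (l : nat) (x : 'I_n -> rat) : Prop :=
  exists b : 'I_m -> R, forall i,
    ratr (x i) = \sum_(j < m | (level u j <= l)%N) b j * (v j i)%:~R.

(* An admissible choice of the e*_{r,s}: the index pair (r,s) is encoded by
   k : 'I_n with r = lev k (s enumerates {k | lev k = r}); for every l the
   family {e k : lev k <= l} is a Q-basis of A^perp_l cap Q^n, and each
   v_j = sum_k a j k e k with integer coefficients a j k = v_j^{r,s}. *)
Definition admissible_basis (u : 'I_n -> R) (lev : 'I_n -> nat)
    (e : 'I_n -> 'I_n -> rat) (a : 'I_m -> 'I_n -> int) : Prop :=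
  [/\ forall l : nat,
        (forall c : 'I_n -> rat,
           (forall i, \sum_(k < n | (lev k <= l)%N) c k * e k i = 0) ->
           forall k, (lev k <= l)%N -> c k = 0) /\
        (forall x : 'I_n -> rat,
           in_Aperp u l x <->
           exists c : 'I_n -> rat, forall i,
             x i = \sum_(k < n | (lev k <= l)%N) c k * e k i)
    & forall j i, ((v j i)%:~R : rat) = \sum_(k < n) (a j k)%:~R * e k i].

Definition ymon (a : 'I_m -> 'I_n -> int) (y : 'I_n -> R[i]) (j : 'I_m) : R[i] :=
  \prod_(k < n) y k ^ a j k.

(* y_{l,s} dF_l^c/dy_{l,s} = sum_{j in I_l} c_j v_j^{l,s} y^{v_j}, with l = lev k *)
Definition strongly_bulk_balanced (u : 'I_n -> R) : Prop :=
  exists (lev : 'I_n -> nat) (e : 'I_n -> 'I_n -> rat) (a : 'I_m -> 'I_n -> int),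
    admissible_basis u lev e a /\
    exists (c : 'I_m -> R[i]) (y : 'I_n -> R[i]),
      (forall j, c j != 0) /\ (forall k, y k != 0) /\
      forall k, \sum_(j < m | level u j == lev k) c j * (a j k)%:~R * ymon a y j = 0.

End Toric.

(* Main.v *)
Require Import Defs.
From HB Require Import structures.
From mathcomp Require Import all_boot all_order all_algebra.
From mathcomp Require Import reals complex zify ring lra.
Set Implicit Arguments. Unset Strict Implicit. Unset Printing Implicit Defensive.
Import Order.TTheory GRing.Theory Num.Theory.
Local Open Scope ring_scope.

Section H.
Variables (R : realType) (n m : nat) (v : 'I_m -> 'I_n -> int) (lam : 'I_m -> R) (u : 'I_n -> R).

Lemma level_eq i j : ell v lam i u = ell v lam j u -> level v lam u i = level v lam u j.
Proof. by rewrite /level => ->. Qed.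

Lemma level_lt i j : ell v lam i u < ell v lam j u -> (level v lam u i < level v lam u j)%N.
Proof.
move=> lt; rewrite /level ltnS.
set si := undup _; set sj := undup _.
have -> : (size si).+1 = size (ell v lam i u :: si) by [].
apply: uniq_leq_size.
  rewrite /= undup_uniq andbT mem_undup; apply/negP => /mapP [x].
  by rewrite mem_filter => /andP [H _] E; rewrite -E ltxx in H.
move=> x; rewrite inE => /orP [/eqP -> | ].
  by rewrite mem_undup; apply/mapP; exists i => //; rewrite mem_filter lt mem_enum.
rewrite !mem_undup => /mapP [y]; rewrite mem_filter => /andP [Hy Hy'] ->.
by apply/mapP; exists y => //; rewrite mem_filter (lt_trans Hy lt).
Qed.

Lemma level_le i j : (level v lam u i <= level v lam u j)%N = (ell v lam i u <= ell v lam j u).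
Proof.
case: (ltgtP (ell v lam i u) (ell v lam j u)) => H.
- by apply: ltnW; apply: level_lt.
- by apply/negbTE; rewrite -ltnNge; apply: level_lt.
- by rewrite (@level_eq i j) ?leqnn // (esym H).
Qed.
End H.

Theorem lemma6p3 (R : realType) (n m : nat)
    (v : 'I_m -> 'I_n -> int) (lam : 'I_m -> R) (u : 'I_n -> R) :
  delzant_polytope v lam ->
  inIntP v lam u ->
  strongly_bulk_balanced v lam u ->
  forall mm : 'I_n -> int, Trop v lam mm u.
Proof.
move=> [_ _ [B HB] _] Hint [lev [e [a [[Hab Hcoord] [c [y [Hc [Hy Heq]]]]]]]] mm.
case: (pickP (fun j => pair v mm j != 0)) => [j1 Hj1 | Hnone]; last first.
  left=> i; apply/eqP/negPn/negP => Hi.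
  have Hi' : ((mm i)%:~R : R) != 0 by rewrite intr_eq0.
  pose t : R := (B + 1 - u i) / (mm i)%:~R.
  pose w := fun k => u k + t * (mm k)%:~R.
  have Hw : inP v lam w.
    move=> j; have /negbFE/eqP Hp := Hnone j.
    have -> : ell v lam j w = ell v lam j u.
      rewrite /ell /w; congr (_ - _).
      under eq_bigr do rewrite mulrDl.
      rewrite big_split /= [X in _ + X](_ : _ = 0) ?addr0 //.
      under eq_bigr do rewrite -mulrA; rewrite -mulr_sumr.
      rewrite [X in t * X](_ : _ = (pair v mm j)%:~R); first by rewrite Hp mulr0.
      rewrite /pair rmorph_sum /=.
      by apply: eq_bigr => k _; rewrite intrM.
    by apply: ltW.
  have := HB w Hw i; rewrite /w /t divfK //.
  have -> : u i + (B + 1 - u i) = B + 1 by lra.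
  move=> H; have := le_trans (ler_norm _) H; lra.
case: (@arg_minP _ _ _ j1 (fun j => pair v mm j != 0) (fun j => ell v lam j u)) => // j0 Hj0 Hmin.
case: (pickP (fun j => (j != j0) && (pair v mm j != 0) && (ell v lam j u == ell v lam j0 u)))
  => [j2 /andP[/andP[H1 H2] /eqP H3] | Hno].
  right; exists j0, j2; split.
  - by rewrite eq_sym.
  - exact: Hj0.
  - exact: H2.
  - by rewrite H3.
  - exact: Hmin.
exfalso.
set l0 := level v lam u j0.
have pz : forall j, (level v lam u j <= l0)%N -> j != j0 -> pair v mm j = 0.
  move=> j Hl Hne; apply/eqP; apply: contraFT (Hno j) => Hp.
  by rewrite Hne Hp /= eq_le Hmin // -level_le Hl.
set L := \max_(k < n) lev k.
have HL : forall k, (lev k <= L)%N by move=> k; apply: leq_bigmax.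
have coords : forall j, (level v lam u j <= l0)%N -> forall k, (l0 < lev k)%N -> a j k = 0.
  move=> j Hj.
  have [cc Hcc] : exists cc : 'I_n -> rat, forall i,
      (v j i)%:~R = \sum_(k < n | (lev k <= l0)%N) cc k * e k i.
    apply/((Hab l0).2 (fun i => (v j i)%:~R)).
    exists (fun j' => if j' == j then 1 else 0) => i.
    rewrite ratr_int (bigD1 j) //= eqxx mul1r big1 ?addr0 //.
    by move=> j' /andP [_ /negbTE ->]; rewrite mul0r.
  pose d k : rat := (if (lev k <= l0)%N then cc k else 0) - (a j k)%:~R.
  have Hd := (Hab L).1 d.
  have Hd0 : forall k, d k = 0.
    move=> k; apply: (Hd _ k (HL k)) => i.
    rewrite (eq_bigl xpredT); last by move=> k'; rewrite /= HL.
    under eq_bigr do rewrite /d mulrBl.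
    rewrite sumrB -Hcoord.
    rewrite [X in X - _](_ : _ = \sum_(k < n | (lev k <= l0)%N) cc k * e k i).
      by rewrite -Hcc subrr.
    by rewrite [RHS]big_mkcond; apply: eq_bigr => k' _; case: ifP; rewrite ?mul0r.
  move=> k Hk; have := Hd0 k; rewrite /d leqNgt Hk /= sub0r.
  move/eqP; rewrite oppr_eq0 intr_eq0 => /eqP //.
pose mu k : rat := \sum_(i < n) (mm i)%:~R * e k i.
have mu0 : forall k, (lev k < l0)%N -> mu k = 0.
  move=> k Hk.
  have [b Hb] : in_Aperp v lam u l0.-1 (e k).
    apply/((Hab l0.-1).2 (e k)).
    exists (fun k' => if k' == k then 1 else 0) => i.
    have Hk' : (lev k <= l0.-1)%N by lia.
    rewrite (bigD1 k Hk') /=.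
    rewrite eqxx mul1r big1 ?addr0 //.
    by move=> k' /andP [_ /negbTE ->]; rewrite mul0r.
  apply/eqP; rewrite -(fmorph_eq0 (@ratr R)); apply/eqP.
  rewrite /mu rmorph_sum /=.
  under eq_bigr do rewrite rmorphM /= ratr_int Hb mulr_sumr.
  rewrite exchange_big /=; apply: big1 => j Hj.
  have Hlt : (level v lam u j < l0)%N by move: Hj; rewrite /l0 /level /=; lia.
  have Hjj : j != j0.
    by apply/negP => /eqP E; rewrite E /l0 ltnn in Hlt.
  transitivity (b j * (pair v mm j)%:~R); last by rewrite (pz j (ltnW Hlt) Hjj) mulr0.
  rewrite /pair rmorph_sum mulr_sumr; apply: eq_bigr => i _.
  by rewrite rmorphM /= mulrCA.
have pairmu : forall j, ((pair v mm j)%:~R : rat) = \sum_(k < n) (a j k)%:~R * mu k.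
  move=> j; rewrite /pair rmorph_sum.
  under eq_bigr do rewrite rmorphM /= Hcoord mulr_sumr.
  rewrite exchange_big; apply: eq_bigr => k _; rewrite /mu mulr_sumr.
  by apply: eq_bigr => i _; rewrite mulrCA.
have pairlev : forall j, level v lam u j = l0 ->
    ((pair v mm j)%:~R : rat) = \sum_(k < n | lev k == l0) (a j k)%:~R * mu k.
  move=> j Hj; rewrite pairmu [RHS]big_mkcond; apply: eq_bigr => k _.
  case: ifP => // Hk.
  case: (ltngtP (lev k) l0) => Hk'.
  - by rewrite mu0 // mulr0.
  - by rewrite coords ?Hj // mul0r.
  - by rewrite Hk' eqxx in Hk.
pose Y := ymon a y.
have HY : Y j0 != 0 by rewrite /Y /ymon; apply/prodf_neq0 => k _; apply: expfz_neq0.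
have key : 0 = c j0 * Y j0 * (pair v mm j0)%:~R.
  transitivity (\sum_(k < n | lev k == l0) ratr (mu k) *
     \sum_(j < m | level v lam u j == lev k) c j * (a j k)%:~R * Y j).
    by rewrite big1 // => k _; rewrite Heq mulr0.
  transitivity (\sum_(j < m | level v lam u j == l0) \sum_(k < n | lev k == l0)
      ratr (mu k) * (c j * (a j k)%:~R * Y j)).
    rewrite exchange_big /=; apply: eq_bigr => k /eqP Hk.
    by rewrite Hk mulr_sumr.
  transitivity (\sum_(j < m | level v lam u j == l0) c j * Y j * (pair v mm j)%:~R).
    apply: eq_bigr => j /eqP Hj.
    rewrite -ratr_int pairlev // rmorph_sum mulr_sumr; apply: eq_bigr => k _.
    by rewrite rmorphM /= ratr_int; ring.
  rewrite (bigD1 j0) //= big1 ?addr0 // => j /andP [/eqP Hj Hne].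
  by rewrite pz ?Hj // mulr0.
have Hp0 : ((pair v mm j0)%:~R : R[i]) != 0 by rewrite intr_eq0.
by have := mulf_neq0 (mulf_neq0 (Hc j0) HY) Hp0; rewrite -key eqxx.
Qed.
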